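(* Let $A,C\in\mathbb{C}^{n\times n}$ be Hermitian positive semidefinite, and let $L,M$ be any complex matrices with $n$ rows such that $A=LL^*$ and $C=MM^*$. Then $I+AC$ is invertible and \[ \|(I+AC)^{-1}\|\le 1+\frac{\min\{\|A\|^{1/2}\|L^*C\|,\ \|C\|^{1/2}\|AM\|\}}{1+\min\sigma(AC)}. \]
   Context: $\|\cdot\|$ is the spectral (operator) norm, $\sigma(\cdot)$ the spectrum. For $A,C$ Hermitian positive semidefinite it is known that $\sigma(AC)=\sigma(CA)\subseteq[0,\infty)$, so $\min\sigma(AC)\ge 0$ is well defined. *)

(* Defs.v *)
From HB Require Import structures.
From mathcomp Require Import all_boot all_order all_algebra.
From mathcomp Require Import complex.
From mathcomp Require Import boolp classical_sets reals.
Set Implicit Arguments. Unset Strict Implicit. Unset Printing Implicit Defensive.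
Import Order.TTheory GRing.Theory Num.Theory.
Local Open Scope ring_scope.
Local Open Scope classical_set_scope.

Definition ctmx (R : realType) (p q : nat) (A : 'M[R[i]]_(p, q)) : 'M[R[i]]_(q, p) :=
  (map_mx (@conjc R) A)^T.

Definition hpsd (R : realType) (n : nat) (A : 'M[R[i]]_n) : Prop :=
  A = ctmx A /\ forall x : 'cV[R[i]]_n, 0 <= (ctmx x *m A *m x) 0 0.

Definition vnorm (R : realType) (q : nat) (x : 'cV[R[i]]_q) : R :=
  Num.sqrt (\sum_(j < q) (@complex.Re R (x j 0) ^+ 2 + @complex.Im R (x j 0) ^+ 2)).

Definition opnorm (R : realType) (p q : nat) (A : 'M[R[i]]_(p, q)) : R :=
  sup [set vnorm (A *m x) | x in [set x : 'cV[R[i]]_q | vnorm x <= 1]].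

(* Main.v *)
Require Import Defs.
From HB Require Import structures.
From mathcomp Require Import all_boot all_order all_algebra.
From mathcomp Require Import complex spectral sesquilinear.
From mathcomp Require Import boolp classical_sets reals.
From mathcomp Require Import ring lra.
Import Order.TTheory GRing.Theory Num.Theory.
Local Open Scope ring_scope.
Local Open Scope complex_scope.
Set Warnings "-all".
Set Implicit Arguments. Unset Strict Implicit. Unset Printing Implicit Defensive.

Section Work.
Variable R : realType.
Local Notation C := (R[i]).
Local Notation Re := (@complex.Re R).
Local Notation Im := (@complex.Im R).
Local Notation "A ^H" := (ctmx A) (at level 2).
Definition dp (q : nat) (x y : 'cV[C]_q) : C := (x^H *m y) 0 0.

Lemma ctmxM p q r (X : 'M[C]_(p,q)) (Y : 'M[C]_(q,r)) : (X *m Y)^H = Y^H *m X^H.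
Proof. by rewrite /ctmx map_mxM trmx_mul. Qed.
Lemma ctmxK p q (X : 'M[C]_(p,q)) : X^H^H = X.
Proof.
rewrite /ctmx map_trmx trmxK; apply/matrixP=> i j; rewrite !mxE; exact: conjcK.
Qed.
Lemma ctmxD p q (X Y : 'M[C]_(p,q)) : (X + Y)^H = X^H + Y^H.
Proof. by apply/matrixP=> i j; rewrite !mxE rmorphD. Qed.
Lemma ctmxN p q (X : 'M[C]_(p,q)) : (- X)^H = - X^H.
Proof. by apply/matrixP=> i j; rewrite !mxE rmorphN. Qed.
Lemma ctmxZ p q (a : C) (X : 'M[C]_(p,q)) : (a *: X)^H = (conjc a) *: X^H.
Proof. by apply/matrixP=> i j; rewrite !mxE rmorphM. Qed.
Lemma ctmx1 p : (1%:M : 'M[C]_p)^H = 1%:M.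
Proof. by apply/matrixP=> i j; rewrite !mxE rmorphMn rmorph1 eq_sym. Qed.
Lemma ctmx0 p q : (0 : 'M[C]_(p,q))^H = 0.
Proof. by apply/matrixP=> i j; rewrite !mxE rmorph0. Qed.
Lemma ctmxV p (X : 'M[C]_p) : (invmx X)^H = invmx (X^H).
Proof. by rewrite /ctmx (map_invmx (@conjc R)) trmx_inv. Qed.

Lemma dpE q (x y : 'cV[C]_q) : dp x y = \sum_j conjc (x j 0) * y j 0.
Proof. by rewrite /dp mxE; apply: eq_bigr => j _; rewrite !mxE. Qed.

Lemma dpC q (x y : 'cV[C]_q) : conjc (dp x y) = dp y x.
Proof.
rewrite !dpE rmorph_sum; apply: eq_bigr => j _; by rewrite rmorphM /= conjcK mulrC.
Qed.

Lemma dp_ge0 q (x : 'cV[C]_q) : 0 <= dp x x.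
Proof. rewrite dpE; apply: sumr_ge0 => j _; rewrite mulrC; exact: mulcJ_ge0. Qed.

Lemma dp_eq0 q (x : 'cV[C]_q) : dp x x = 0 -> x = 0.
Proof.
rewrite dpE => /eqP; rewrite psumr_eq0 => [/allP H|j _]; last first.
  by rewrite mulrC; exact: mulcJ_ge0.
apply/matrixP=> j o; rewrite ord1 mxE; have := H j (mem_index_enum _).
by rewrite mulrC -sqr_normc sqrf_eq0 normr_eq0 => /eqP.
Qed.

Lemma dpMl q p (X : 'M[C]_(q,p)) x y : dp (X *m x) y = dp x (X^H *m y).
Proof. by rewrite /dp ctmxM mulmxA. Qed.
Lemma dpDr q (x y z : 'cV[C]_q) : dp x (y + z) = dp x y + dp x z.
Proof. by rewrite /dp mulmxDr mxE. Qed.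
Lemma dpDl q (x y z : 'cV[C]_q) : dp (x + y) z = dp x z + dp y z.
Proof. by rewrite /dp ctmxD mulmxDl mxE. Qed.
Lemma dpZr q a (x y : 'cV[C]_q) : dp x (a *: y) = a * dp x y.
Proof. by rewrite /dp -scalemxAr mxE. Qed.
Lemma dpZl q a (x y : 'cV[C]_q) : dp (a *: x) y = conjc a * dp x y.
Proof. by rewrite /dp ctmxZ -scalemxAl mxE. Qed.
Lemma dpNr q (x y : 'cV[C]_q) : dp x (- y) = - dp x y.
Proof. by rewrite /dp mulmxN mxE. Qed.
Lemma dpNl q (x y : 'cV[C]_q) : dp (- x) y = - dp x y.
Proof. by rewrite /dp ctmxN mulNmx mxE. Qed.
Lemma dp0r q (x : 'cV[C]_q) : dp x 0 = 0.
Proof. by rewrite /dp mulmx0 mxE. Qed.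
Lemma dp0l q (x : 'cV[C]_q) : dp 0 x = 0.
Proof. by rewrite /dp ctmx0 mul0mx mxE. Qed.

Definition nr q (x : 'cV[C]_q) : R := \sum_j (Re (x j 0) ^+ 2 + Im (x j 0) ^+ 2).
Lemma vnormE q (x : 'cV[C]_q) : vnorm x = Num.sqrt (nr x). Proof. by []. Qed.
Lemma nr_ge0 q (x : 'cV[C]_q) : 0 <= nr x.
Proof. by apply: sumr_ge0 => j _; rewrite addr_ge0 ?sqr_ge0. Qed.
Lemma nrE q (x : 'cV[C]_q) : (nr x)%:C = dp x x.
Proof.
rewrite dpE /nr rmorph_sum; apply: eq_bigr => j _.
rewrite -[RHS]mulrC -sqr_normc -add_Re2_Im2 /=. by [].
Qed.
Lemma ReD (a b : C) : Re (a + b) = Re a + Re b. Proof. by case: a; case: b. Qed.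
Lemma ReN (a : C) : Re (- a) = - Re a. Proof. by case: a. Qed.
Lemma ReMR (t : R) (a : C) : Re (t%:C * a) = t * Re a.
Proof. by case: a => a b /=; rewrite mul0r subr0. Qed.
Lemma ReJ (a : C) : Re (conjc a) = Re a. Proof. by case: a. Qed.
Lemma ReR (t : R) : Re (t%:C) = t. Proof. by []. Qed.
Lemma Re_dpxx q (x : 'cV[C]_q) : Re (dp x x) = nr x. Proof. by rewrite -nrE. Qed.
Lemma vnorm_ge0 q (x : 'cV[C]_q) : 0 <= vnorm x. Proof. exact: sqrtr_ge0. Qed.
Lemma vnorm_sqr q (x : 'cV[C]_q) : vnorm x ^+ 2 = nr x.
Proof. by rewrite vnormE sqr_sqrtr // nr_ge0. Qed.
Lemma nr_eq0 q (x : 'cV[C]_q) : nr x = 0 -> x = 0.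
Proof. by move=> h; apply: dp_eq0; rewrite -nrE h. Qed.

Lemma CS q (x y : 'cV[C]_q) : Re (dp x y) <= vnorm x * vnorm y.
Proof.
have key t : 0 <= t ^+ 2 * nr x - 2%:R * t * Re (dp x y) + nr y.
  have := nr_ge0 (t%:C *: x - y); rewrite -Re_dpxx.
  rewrite dpDl !dpDr !dpNl !dpNr !dpZl !dpZr -(dpC x y) conjc_real.
  rewrite !ReD !ReN !ReMR ReJ !Re_dpxx.
  by move=> h; apply: (le_trans h); rewrite le_eqVlt; apply/orP; left; apply/eqP; ring.
have [x0|xn0] := eqVneq (nr x) 0.
  by rewrite (nr_eq0 x0) dp0l /= mulr_ge0 ?vnorm_ge0.
have xp : 0 < nr x by rewrite lt_def xn0 nr_ge0.
set r := Re (dp x y).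
have h : r ^+ 2 <= nr x * nr y.
  have := key (r / nr x).
  set a := nr x; set b := nr y => hk.
  have e : (r / a) ^+ 2 * a - 2%:R * (r / a) * r + b = b - r ^+ 2 / a.
    by field; rewrite lt0r_neq0.
  by rewrite e subr_ge0 ler_pdivrMr // mulrC in hk.
apply: (le_trans (ler_norm r)).
rewrite !vnormE -sqrtrM ?nr_ge0 // -sqrtr_sqr ler_sqrt //.
by rewrite mulr_ge0 ?nr_ge0.
Qed.
Lemma ReC_dp q (x y : 'cV[C]_q) : Re (dp y x) = Re (dp x y).
Proof. by rewrite -dpC ReJ. Qed.

Lemma nrD q (x y : 'cV[C]_q) : nr (x + y) = nr x + 2%:R * Re (dp x y) + nr y.
Proof.
rewrite -!Re_dpxx dpDl !dpDr !ReD ReC_dp; ring.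
Qed.
Lemma nrN q (x : 'cV[C]_q) : nr (- x) = nr x.
Proof. by rewrite -!Re_dpxx dpNl dpNr opprK. Qed.
Lemma nrZR q (t : R) (x : 'cV[C]_q) : nr (t%:C *: x) = t ^+ 2 * nr x.
Proof.
apply: complexI; rewrite !nrE dpZl dpZr conjc_real mulrA -nrE.
by rewrite -!rmorphM /= expr2.
Qed.
Lemma nri q (x : 'cV[C]_q) : nr ('i *: x) = nr x.
Proof.
apply: complexI; rewrite !nrE dpZl dpZr mulrA.
have -> : conjc 'i * 'i = 1 :> C by apply/eqP; rewrite eq_complex /=; apply/andP; split; apply/eqP; ring.
by rewrite mul1r.
Qed.
Lemma vnormD q (x y : 'cV[C]_q) : vnorm (x + y) <= vnorm x + vnorm y.
Proof.
have h : nr (x + y) <= (vnorm x + vnorm y) ^+ 2.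
  rewrite nrD sqrrD !vnorm_sqr; have := CS x y.
  by move=> h; lra.
rewrite vnormE -(ger0_norm (addr_ge0 (vnorm_ge0 x) (vnorm_ge0 y))) -sqrtr_sqr.
by rewrite ler_sqrt // sqr_ge0.
Qed.
Lemma vnormN q (x : 'cV[C]_q) : vnorm (- x) = vnorm x.
Proof. by rewrite !vnormE nrN. Qed.
Lemma vnormB q (x y : 'cV[C]_q) : vnorm (x - y) <= vnorm x + vnorm y.
Proof. by rewrite -(vnormN y) vnormD. Qed.
Lemma vnormZ q (t : R) (x : 'cV[C]_q) : vnorm (t%:C *: x) = `|t| * vnorm x.
Proof. by rewrite !vnormE nrZR sqrtrM ?sqr_ge0 // sqrtr_sqr. Qed.
Lemma nr0 q : nr (0 : 'cV[C]_q) = 0.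
Proof. by rewrite /nr big1 // => j _; rewrite mxE /= expr0n /= addr0. Qed.
Lemma vnorm0 q : vnorm (0 : 'cV[C]_q) = 0.
Proof. by rewrite vnormE nr0 sqrtr0. Qed.
Lemma vnorm_eq0 q (x : 'cV[C]_q) : vnorm x = 0 -> x = 0.
Proof. by rewrite vnormE => /eqP; rewrite sqrtr_eq0 => h; apply: nr_eq0; apply/eqP; rewrite eq_le h nr_ge0. Qed.

Lemma dp_row p q (X : 'M[C]_(p,q)) (x : 'cV[C]_q) i : dp ((row i X)^H) x = (X *m x) i 0.
Proof. by rewrite /dp ctmxK -row_mul mxE. Qed.

Lemma bound_Re q (u x : 'cV[C]_q) : Re (dp u x) ^+ 2 <= nr u * nr x.
Proof.
have h1 := CS u x; have h2 := CS (- u) x.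
rewrite dpNl ReN vnormN in h2.
rewrite -!vnorm_sqr -exprMn.
have := mulr_ge0 (vnorm_ge0 u) (vnorm_ge0 x); move: h1 h2.
set r := Re _; set c := _ * _ => h1 h2 h3; nra.
Qed.
Lemma bound_Im q (u x : 'cV[C]_q) : Im (dp u x) ^+ 2 <= nr u * nr x.
Proof.
have := bound_Re ('i *: u) x; rewrite nri dpZl.
suff -> : Re (conjc 'i * dp u x) = Im (dp u x) by [].
by case: (dp u x) => a b /=; ring.
Qed.

Lemma bounded p q (X : 'M[C]_(p,q)) : exists K, 0 <= K /\ forall x, vnorm (X *m x) <= K * vnorm x.
Proof.
set K2 := 2%:R * \sum_i nr ((row i X)^H).
have K2ge0 : 0 <= K2 by rewrite mulr_ge0 ?ler0n // sumr_ge0 // => i _; exact: nr_ge0.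
exists (Num.sqrt K2); split; first exact: sqrtr_ge0.
move=> x; rewrite !vnormE -sqrtrM // ler_sqrt; last by rewrite mulr_ge0 // nr_ge0.
rewrite /K2 -mulrA mulr_suml mulr_sumr /nr; apply: ler_sum => i _.
rewrite -(dp_row X x i) mulr_natl mulr2n.
by apply: lerD; [apply: bound_Re | apply: bound_Im].
Qed.

Definition Sset p q (X : 'M[C]_(p,q)) : set R :=
  [set vnorm (X *m x) | x in [set x : 'cV[C]_q | vnorm x <= 1]].
Lemma opnormE p q (X : 'M[C]_(p,q)) : opnorm X = sup (Sset X). Proof. by []. Qed.

Lemma Sset_sup p q (X : 'M[C]_(p,q)) : has_sup (Sset X).
Proof.
split.
  exists 0, 0; last by rewrite mulmx0 vnorm0.
  by rewrite /= vnorm0 ler01.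
have [K [K0 HK]] := bounded X.
exists K => _ [x /= hx <-]; apply: (le_trans (HK x)).
by rewrite -[leRHS]mulr1 ler_wpM2l.
Qed.

Lemma opnorm_ub p q (X : 'M[C]_(p,q)) x : vnorm x <= 1 -> vnorm (X *m x) <= opnorm X.
Proof. by move=> hx; apply: (sup_upper_bound (Sset_sup X)); exists x. Qed.

Lemma opnorm_ge0 p q (X : 'M[C]_(p,q)) : 0 <= opnorm X.
Proof. by have := opnorm_ub X (x := 0); rewrite mulmx0 !vnorm0 ler01; apply. Qed.

Lemma opnorm_le p q (X : 'M[C]_(p,q)) b :
  (forall x, vnorm x <= 1 -> vnorm (X *m x) <= b) -> opnorm X <= b.
Proof.
move=> H; apply: ge_sup; first by case: (Sset_sup X).
by move=> _ [x /= hx <-]; apply: H.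
Qed.

Lemma opnormP p q (X : 'M[C]_(p,q)) x : vnorm (X *m x) <= opnorm X * vnorm x.
Proof.
have [x0|xn0] := eqVneq (vnorm x) 0.
  by move: (vnorm_eq0 x0) => ->; rewrite mulmx0 !vnorm0 mulr0 lexx.
have xp : 0 < vnorm x by rewrite lt_def xn0 vnorm_ge0.
set t := (vnorm x)^-1.
have h := opnorm_ub X (x := t%:C *: x).
rewrite -scalemxAr !vnormZ gtr0_norm ?invr_gt0 // mulVf // lexx in h.
have := h isT; rewrite -(ler_pM2r xp) mulrAC mulVf // mul1r; apply.
Qed.
Lemma opnorm_ct_le p q (X : 'M[C]_(p,q)) : opnorm X <= opnorm X^H.
Proof.
apply: opnorm_le => x hx.
have h : nr (X *m x) <= vnorm x * (opnorm X^H * vnorm (X *m x)).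
  rewrite -Re_dpxx dpMl; apply: (le_trans (CS _ _)).
  by rewrite ler_wpM2l ?vnorm_ge0 // opnormP.
rewrite -vnorm_sqr in h.
have := vnorm_ge0 (X *m x); have := vnorm_ge0 x; have := opnorm_ge0 X^H.
move: h hx; set v := vnorm (X *m x); set a := vnorm x; set c := opnorm _.
move=> h hx c0 a0 v0.
have h2 : a * (c * v) <= c * v by rewrite ler_piMl ?mulr_ge0.
have h3 : v ^+ 2 <= c * v by apply: le_trans h2.
nra.
Qed.
Lemma opnorm_ct p q (X : 'M[C]_(p,q)) : opnorm X^H = opnorm X.
Proof.
apply/eqP; rewrite eq_le opnorm_ct_le; have := opnorm_ct_le X^H.
by rewrite ctmxK => ->.
Qed.

Lemma LH_bound n k (L : 'M[C]_(n,k)) v :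
  vnorm (L^H *m v) <= Num.sqrt (opnorm (L *m L^H)) * vnorm v.
Proof.
have h : nr (L^H *m v) <= opnorm (L *m L^H) * nr v.
  rewrite -Re_dpxx dpMl ctmxK mulmxA; apply: (le_trans (CS _ _)).
  rewrite -vnorm_sqr expr2 mulrA [_ * vnorm v]mulrC.
  by apply: ler_wpM2l; rewrite ?vnorm_ge0 // opnormP.
by rewrite !vnormE -sqrtrM ?opnorm_ge0 // ler_sqrt // mulr_ge0 ?opnorm_ge0 ?nr_ge0.
Qed.
Lemma L_bound n k (L : 'M[C]_(n,k)) y :
  vnorm (L *m y) <= Num.sqrt (opnorm (L *m L^H)) * vnorm y.
Proof.
apply: (le_trans (opnormP _ _)); rewrite ler_wpM2r ?vnorm_ge0 //.
rewrite -opnorm_ct; apply: opnorm_le => x hx.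
apply: (le_trans (LH_bound _ _)).
by rewrite -[leRHS]mulr1 ler_wpM2l ?sqrtr_ge0.
Qed.
Lemma tstar_ct p q (X : 'M[C]_(p,q)) : (X ^t* )%sesqui = X^H.
Proof. by rewrite /ctmx map_trmx. Qed.

Lemma core n k (L : 'M[C]_(n,k)) (Cm : 'M[C]_n) (mu : R) :
  Cm^H = Cm ->
  (forall (v : 'cV[C]_n) (lam : C), v != 0 -> (L *m L^H *m Cm) *m v = lam *: v -> (mu%:C <= lam)) ->
  forall w : 'cV[C]_n,
  mu%:C * dp (L^H *m w) (L^H *m w) <= dp (L^H *m w) ((L^H *m Cm *m L) *m (L^H *m w)).
Proof.
move=> CH Hmu w.
set K := L^H *m Cm *m L.
have KH : K^H = K by rewrite /K !ctmxM ctmxK CH mulmxA.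
have Kn : K \is normalmx.
  by rewrite qualifE tstar_ct KH.
have /orthomx_spectralP := Kn.
set P := spectralmx K; set d := spectral_diag K => KE.
have PU : P *m P^H = 1%:M.
  by rewrite -tstar_ct; apply/unitarymxP; exact: spectral_unitarymx.
have PU' : P^H *m P = 1%:M by apply: mulmx1C.
have iP : invmx P = P^H.
  by rewrite -tstar_ct; apply: invmx_unitary; exact: spectral_unitarymx.
rewrite iP in KE.
set y := L^H *m w; set z := P *m y.
have e1 : dp y y = dp z z by rewrite /z [RHS]dpMl mulmxA PU' mul1mx.
have e2 : dp y (K *m y) = dp z (diag_mx d *m z).
  by rewrite /z [RHS]dpMl KE !mulmxA.
rewrite e1 e2 !dpE mulr_sumr; apply: ler_sum => i _.
have dz : (diag_mx d *m z) i 0 = d 0 i * z i 0 by rewrite mul_diag_mx mxE.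
rewrite dz.
have PK : P *m K = diag_mx d *m P.
  by rewrite KE !mulmxA PU mul1mx.
have rowK : row i P *m K = d 0 i *: row i P.
  by rewrite -row_mul PK row_mul row_diag_mx -scalemxAl -rowE.
set u := (row i P)^H.
have Ku : K *m u = conjc (d 0 i) *: u.
  by rewrite /u -{1}KH -ctmxM rowK ctmxZ.
have [Lu0|Lun0] := eqVneq (L *m u) 0.
  have -> : z i 0 = 0.
    by rewrite /z -dp_row -/u /y -dpMl Lu0 dp0l.
  by rewrite rmorph0 !mul0r mulr0.
have := Hmu (L *m u) (conjc (d 0 i)) Lun0.
have eqv : L *m L^H *m Cm *m (L *m u) = conjc (d 0 i) *: (L *m u).
  by rewrite scalemxAr -Ku /K !mulmxA.
move=> /(_ eqv).
rewrite lecE => /andP[hIm hRe].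
have dR : d 0 i = (Re (d 0 i))%:C.
  by move: hIm; case: (d 0 i) => a b /= /eqP h; rewrite -[b]opprK h oppr0.
rewrite dR [X in _ <= X]mulrCA; apply: ler_wpM2r; first by rewrite mulrC; apply: mulcJ_ge0.
by rewrite lecR; move: hRe; rewrite ReJ.
Qed.
Lemma bound1 n k (A Cm : 'M[C]_n) (L : 'M[C]_(n,k)) (mu : R) :
  A = L *m L^H -> Cm^H = Cm -> 0 < 1 + mu -> (1%:M + A *m Cm) \in unitmx ->
  (forall (v : 'cV[C]_n) (lam : C), v != 0 -> (A *m Cm) *m v = lam *: v -> (mu%:C <= lam)) ->
  opnorm (invmx (1%:M + A *m Cm)) <=
    1 + Num.sqrt (opnorm A) * opnorm (L^H *m Cm) / (1 + mu).
Proof.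
move=> AL CH mup Bu Hmu.
set B := invmx (1%:M + A *m Cm).
apply: opnorm_le => x hx.
set y := L^H *m Cm *m B *m x.
have BE : B *m x + A *m Cm *m (B *m x) = x.
  have e : (1%:M + A *m Cm) *m (B *m x) = x by rewrite mulmxA mulmxV // mul1mx.
  by rewrite mulmxDl mul1mx in e.
have Bx : B *m x = x - L *m y.
  have e : L *m y = A *m Cm *m (B *m x) by rewrite /y AL !mulmxA.
  by rewrite e; apply/eqP; rewrite eq_sym subr_eq BE.
set K := L^H *m Cm *m L.
have Ky : y + K *m y = L^H *m Cm *m x.
  have e : L^H *m Cm *m x = L^H *m Cm *m (B *m x + A *m Cm *m (B *m x)) by rewrite BE.
  by rewrite e mulmxDr /y /K AL !mulmxA.
set c := opnorm (L^H *m Cm); set s := Num.sqrt (opnorm A).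
have c0 : 0 <= c by exact: opnorm_ge0.
have s0 : 0 <= s by exact: sqrtr_ge0.
have hy : vnorm y <= c / (1 + mu).
  have core' := @core n k L Cm mu CH.
  have yE : y = L^H *m (Cm *m B *m x) by rewrite /y !mulmxA.
  have h1 : mu * nr y <= Re (dp y (K *m y)).
    have Hmu' : forall (v : 'cV[C]_n) (lam : C), v != 0 ->
        (L *m L^H *m Cm) *m v = lam *: v -> (mu%:C <= lam).
      by move=> v lam vn0 ev; apply: Hmu vn0 _; rewrite AL.
    have := core' Hmu' (Cm *m B *m x); rewrite -yE -/K -nrE -rmorphM lecE.
    by move=> /andP[_ h].
  have h2 : Re (dp y (L^H *m Cm *m x)) <= vnorm y * c.
    apply: (le_trans (CS _ _)); apply: ler_wpM2l; first exact: vnorm_ge0.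
    apply: (le_trans (opnormP _ _)); rewrite -[leRHS]mulr1; apply: ler_wpM2l => //.
  rewrite -Ky dpDr ReD Re_dpxx in h2.
  have h3 : (1 + mu) * (vnorm y * vnorm y) <= c * vnorm y.
    by rewrite -expr2 vnorm_sqr; lra.
  rewrite ler_pdivlMr //.
  have := vnorm_ge0 y; move: h3; set v := vnorm y => h3 v0.
  nra.
rewrite Bx; apply: (le_trans (vnormB _ _)).
apply: lerD => //; apply: (le_trans (L_bound _ _)).
rewrite -AL -/s -mulrA; apply: ler_wpM2l => //.
Qed.
Lemma dpMr q p (X : 'M[C]_(q,p)) x y : dp x (X *m y) = dp (X^H *m x) y.
Proof. by rewrite dpMl ctmxK. Qed.

Lemma ker_col n (X : 'M[C]_n) : X \notin unitmx -> exists2 w : 'cV[C]_n, w != 0 & X *m w = 0.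
Proof.
rewrite unitmxE unitfE negbK -det_tr => /det0P [v vn0 h].
exists v^T; first by rewrite trmx_eq0.
by rewrite -[X]trmxK -trmx_mul h trmx0.
Qed.

Lemma eig_col n (X : 'M[C]_n) a :
  eigenvalue X a <-> exists2 v : 'cV[C]_n, v != 0 & X *m v = a *: v.
Proof.
have E : eigenvalue X a = (\det (a%:M - X) == 0).
  apply/eigenvalueP/det0P => [[v Xv vn0]|[v vn0 h]]; exists v => //.
    by rewrite mulmxBr mul_mx_scalar Xv subrr.
  by rewrite mulmxBr mul_mx_scalar in h; rewrite (subr0_eq h).
rewrite E -det_tr; split.
  move=> /det0P [w wn0 h]; exists w^T; first by rewrite trmx_eq0.
  have : (a%:M - X) *m w^T = 0 by rewrite -[a%:M - X]trmxK -trmx_mul h trmx0.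
  by rewrite mulmxBl mul_scalar_mx => /subr0_eq.
move=> [v vn0 h]; apply/det0P; exists v^T; first by rewrite trmx_eq0.
by rewrite -trmx_mul mulmxBl mul_scalar_mx h subrr trmx0.
Qed.

Lemma q1E n l (M : 'M[C]_(n,l)) (x : 'cV[C]_n) :
  dp (M *m M^H *m x) x = dp (M^H *m x) (M^H *m x).
Proof. by rewrite -mulmxA dpMl. Qed.

Lemma inv_lem n k l (A Cm : 'M[C]_n) (L : 'M[C]_(n,k)) (M : 'M[C]_(n,l)) :
  A = L *m L^H -> Cm = M *m M^H -> (1%:M + A *m Cm) \in unitmx.
Proof.
move=> AL CM; case: (boolP (1%:M + A *m Cm \in unitmx)) => // /ker_col [x xn0].
rewrite mulmxDl mul1mx => hx.
have := congr1 (dp (Cm *m x)) hx; rewrite dpDr dp0r.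
have e2 : dp (Cm *m x) (A *m Cm *m x) = dp (L^H *m (Cm *m x)) (L^H *m (Cm *m x)).
  by rewrite AL -!mulmxA dpMr.
have e1 : dp (Cm *m x) x = dp (M^H *m x) (M^H *m x) by rewrite {1}CM q1E.
rewrite e1 e2 => /eqP; rewrite paddr_eq0 ?dp_ge0 // => /andP[/eqP h _].
have Cx : Cm *m x = 0 by rewrite CM -mulmxA (dp_eq0 h) mulmx0.
move: hx; rewrite -mulmxA Cx mulmx0 addr0 => x0.
by rewrite x0 eqxx in xn0.
Qed.

Lemma eig_ge0 n k l (A Cm : 'M[C]_n) (L : 'M[C]_(n,k)) (M : 'M[C]_(n,l)) (v : 'cV[C]_n) (lam : C) :
  A = L *m L^H -> Cm = M *m M^H -> v != 0 -> A *m Cm *m v = lam *: v -> 0 <= lam.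
Proof.
move=> AL CM vn0 ev.
have := congr1 (dp (Cm *m v)) ev; rewrite dpZr.
have e2 : dp (Cm *m v) (A *m Cm *m v) = dp (L^H *m (Cm *m v)) (L^H *m (Cm *m v)).
  by rewrite AL -!mulmxA dpMr.
have e1 : dp (Cm *m v) v = dp (M^H *m v) (M^H *m v) by rewrite {1}CM q1E.
rewrite e1 e2 => h.
have [q0|qn0] := eqVneq (dp (M^H *m v) (M^H *m v)) 0.
  have Cv : Cm *m v = 0 by rewrite CM -mulmxA (dp_eq0 q0) mulmx0.
  move: ev; rewrite -mulmxA Cv mulmx0 => /esym/eqP; rewrite scalemx_eq0 (negPf vn0) orbF.
  by move=> /eqP ->.
have qp : 0 < dp (M^H *m v) (M^H *m v) by rewrite lt_def qn0 dp_ge0.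
by rewrite -(pmulr_lge0 _ qp) -h dp_ge0.
Qed.
End Work.

Theorem theorem3p1 (R : realType) (n k l : nat)
    (A C : 'M[R[i]]_n) (L : 'M[R[i]]_(n, k)) (M : 'M[R[i]]_(n, l)) :
  hpsd A -> hpsd C -> A = L *m ctmx L -> C = M *m ctmx M ->
  (1%:M + A *m C \in unitmx) /\
  (forall mu : R,
     eigenvalue (A *m C) (mu%:C)%C ->
     (forall a : R[i], eigenvalue (A *m C) a -> (mu%:C)%C <= a) ->
     opnorm (invmx (1%:M + A *m C)) <=
       1 + Num.min (Num.sqrt (opnorm A) * opnorm (ctmx L *m C))
                   (Num.sqrt (opnorm C) * opnorm (A *m M)) / (1 + mu)).
Proof.
move=> [AH _] [CH _] AL CM.
have Bu := inv_lem AL CM.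
split => // mu mueig mumin.
have mu0 : 0 <= mu.
  have [v vn0 ev] := (eig_col _ _).1 mueig.
  by have := eig_ge0 AL CM vn0 ev; rewrite ler0c.
have mup : 0 < 1 + mu by lra.
have HAC : forall (v : 'cV[R[i]]_n) (lam : R[i]), v != 0 -> A *m C *m v = lam *: v -> (mu%:C)%C <= lam.
  by move=> v lam vn0 ev; apply: mumin; apply/eig_col; exists v.
have HCA : forall (v : 'cV[R[i]]_n) (lam : R[i]), v != 0 -> C *m A *m v = lam *: v -> (mu%:C)%C <= lam.
  move=> v lam vn0 ev.
  have [Av0|Avn0] := eqVneq (A *m v) 0.
    have lam0 : lam = 0.
      move: ev; rewrite -mulmxA Av0 mulmx0 => /esym/eqP; rewrite scalemx_eq0 (negPf vn0) orbF.
      by move=> /eqP.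
    rewrite lam0.
    case: (boolP (C \in unitmx)) => [Cu|/ker_col [w wn0 Cw]].
      apply: (HAC (invmx C *m v)).
        apply/negP => /eqP w0; move: vn0; rewrite -[v]mul1mx -(mulmxV Cu) -mulmxA w0 mulmx0.
        by rewrite eqxx.
      by rewrite -mulmxA [C *m _]mulmxA mulmxV // mul1mx Av0 scale0r.
    by apply: (HAC w) => //; rewrite -mulmxA Cw mulmx0 scale0r.
  apply: (HAC (A *m v)) => //.
  by rewrite -mulmxA [C *m _]mulmxA ev scalemxAr.
have h1 := bound1 AL (esym CH) mup Bu HAC.
have Bu2 := inv_lem CM AL.
have h2 := bound1 CM (esym AH) mup Bu2 HCA.
have e1 : invmx (1%:M + C *m A) = ctmx (invmx (1%:M + A *m C)).
  by rewrite ctmxV ctmxD ctmx1 ctmxM -AH -CH.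
have e2 : opnorm (ctmx M *m A) = opnorm (A *m M).
  by rewrite -opnorm_ct ctmxM ctmxK -AH.
rewrite e1 opnorm_ct e2 in h2.
case: (leP (Num.sqrt (opnorm A) * opnorm (ctmx L *m C))
            (Num.sqrt (opnorm C) * opnorm (A *m M))) => _; first [exact: h1 | exact: h2].
Qed.
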